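(* Let $k\ge 1$, let $(\varphi,G,H)$ be a $k$-orbit-form and $\sigma$ a $k$-molecule over $I$. Then for every automorphism $\pi\in\mathrm{Aut}(I)$ we have $\pi\big((\varphi,G,H)*\sigma\big)=(\varphi,G,H)*\pi\sigma$.
   Context: $I$ is a finite set of atoms partitioned into a finite set $C$ of colours. $\mathrm{Sym}(I)$ is the group of all permutations of $I$, and $\mathrm{Aut}(I)\subseteq\mathrm{Sym}(I)$ the subgroup of permutations mapping each colour onto itself. Permutations act on hereditarily finite sets over $I$ by $\theta(x)=\{\theta(y)\mid y\in x\}$; for a set $G$ of permutations and object $x$, $G(x)=Gx=\{g(x)\mid g\in G\}$. A $k$-molecule is an injective map $\sigma:\{0,\dots,k-1\}\to I$; $\pi\sigma$ denotes composition. The configuration $\mathit{conf}(\sigma_0,\dots,\sigma_{\ell-1})$ of a sequence of $k$-molecules is the pair $(\sim,col)$ where $\sim$ is the equivalence relation on $\{0,\dots,\ell-1\}\times\{0,\dots,k-1\}$ with $(i,p)\sim(j,q)$ iff $\sigma_i(p)=\sigma_j(q)$, and $col(i,p)$ is the colour containing $\sigma_i(p)$. An abstract $\ell$-configuration is a pair $(\sim,col)$ with $\sim$ an equivalence relation on $\{0,\dots,\ell-1\}\times\{0,\dots,k-1\}$ such that $(i,p)\sim(i,q)\Leftrightarrow p=q$, and $col:\{0,\dots,\ell-1\}\times\{0,\dots,k-1\}\to C$ constant on $\sim$-classes. The $k$-forms form the smallest set containing new symbols $c_0,\dots,c_{k-1}$ and all finite sets $\{(\varphi_i,E_i)\mid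 1\le i\le n\}$ with $\varphi_i$ $k$-forms and $E_i$ abstract 2-configurations. For a $k$-form $\varphi$ and $k$-molecule $\sigma$: $c_p*\sigma=\sigma(p)$, and for $\varphi=\{(\varphi_i,E_i)\mid 1\le i\le n\}$, $\varphi*\sigma=\{\varphi_i*\tau\mid 1\le i\le n,\ \tau \text{ a }k\text{-molecule with } E_i=\mathit{conf}(\tau,\sigma)\}$. A $k$-orbit-form is a triple $(\varphi,G,H)$ with $\varphi$ a $k$-form and $H\subseteq G\subseteq\mathrm{Sym}(I)$ subgroups commuting with $\mathrm{Aut}(I)$ in the sense $\pi G=G\pi$ and $\pi H=H\pi$ for all $\pi\in\mathrm{Aut}(I)$. Define $(\varphi,G,H)*\sigma=G\big(\bigcup_{h\in H}\varphi*h\sigma\big)$, where for $\varphi=c_p$ and $H\neq 1$ the term $\varphi*h\sigma$ inside the union is understood as $\{c_p*h\sigma\}$. *)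

(* Defs.v *)
From mathcomp Require Import all_boot all_fingroup.
Set Implicit Arguments. Unset Strict Implicit. Unset Printing Implicit Defensive.

Local Open Scope group_scope.

(* Raw representation: an atom, or a finite set given by a list of its
   elements; equality of sets is extensional equality [hf_eq]. *)
Inductive hf (I : Type) := Atom of I | Node of seq (hf I).
Arguments Atom {I}. Arguments Node {I}.

Section HF.
Variable I : eqType.

Fixpoint hf_eq (x y : hf I) {struct x} : bool :=
  match x, y with
  | Atom a, Atom b => a == b
  | Node l, Node m =>
      all (fun x' => has (hf_eq x') m) l &&
      all (fun y' => has (fun x' => hf_eq x' y') l) m
  | _, _ => false
  end.

Definition hf_elems (x : hf I) : seq (hf I) :=
  match x with Atom _ => [::] | Node l => l end.
End HF.

Fixpoint hf_act (I : finType) (t : {perm I}) (x : hf I) : hf I :=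
  match x with
  | Atom a => Atom (t a)
  | Node l => Node (map (hf_act t) l)
  end.

Definition hf_orbit (I : finType) (G : {set {perm I}}) (x : hf I) : hf I :=
  Node [seq hf_act g x | g <- enum G].

(* The partition of I into colours is given by the map [col : I -> C]
   sending an atom to its colour. *)
Definition AutI (I C : finType) (col : I -> C) : {set {perm I}} :=
  [set p : {perm I} | [forall x, col (p x) == col x]].

Section Molecules.
Variables (I C : finType) (col : I -> C) (k : nat).

Definition molecule (s : {ffun 'I_k -> I}) : bool := injectiveb s.

Definition mol_comp (p : {perm I}) (s : {ffun 'I_k -> I}) : {ffun 'I_k -> I} :=
  [ffun i => p (s i)].

(* abstract 2-configurations: (~, col) on {0,1} x {0..k-1} *)
Definition config := ({ffun ('I_2 * 'I_k) * ('I_2 * 'I_k) -> bool}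
                      * {ffun ('I_2 * 'I_k) -> C})%type.

Definition abstract_conf (E : config) : bool :=
  let R := fun u v => E.1 (u, v) in
  [&& [forall u, R u u],
      [forall u, forall v, R u v ==> R v u],
      [forall u, forall v, forall w, R u v ==> R v w ==> R u w],
      [forall i, forall p, forall q, R (i, p) (i, q) == (p == q)] &
      [forall u, forall v, R u v ==> (E.2 u == E.2 v)]].

Definition pick2 (t s : {ffun 'I_k -> I}) (i : 'I_2) : {ffun 'I_k -> I} :=
  if val i == 0 then t else s.

Definition conf (t s : {ffun 'I_k -> I}) : config :=
  ([ffun uv : ('I_2 * 'I_k) * ('I_2 * 'I_k) =>
      pick2 t s uv.1.1 uv.1.2 == pick2 t s uv.2.1 uv.2.2],
   [ffun u : 'I_2 * 'I_k => col (pick2 t s u.1 u.2)]).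

Definition mols_with (E : config) (s : {ffun 'I_k -> I}) : seq {ffun 'I_k -> I} :=
  [seq t <- enum {ffun 'I_k -> I} | molecule t && (conf t s == E)].

(* FC p = c_p ;  FS l = the finite set {(phi_i, E_i)} listed by l *)
Inductive form := FC of 'I_k | FS of seq (form * config).

Fixpoint wf_form (f : form) : bool :=
  match f with
  | FC _ => true
  | FS l => all (fun fe => let: (f', E) := fe in wf_form f' && abstract_conf E) l
  end.

Fixpoint fstar (f : form) (s : {ffun 'I_k -> I}) : hf I :=
  match f with
  | FC p => Atom (s p)
  | FS l => Node (flatten (map (fun fe => let: (f', E) := fe in
                                 map (fun t => fstar f' t) (mols_with E s)) l))
  end.

(* (phi, G, H) * sigma = G ( U_{h in H} phi * h sigma ), where for phi = c_p
   and H <> 1 the term phi * h sigma is read as {c_p * h sigma}. *)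
Definition ostar (f : form) (G H : {set {perm I}}) (s : {ffun 'I_k -> I}) : hf I :=
  let U := match f with
           | FC p => if H == 1 then Atom (s p)
                     else Node [seq Atom (h (s p)) | h : {perm I} <- enum H]
           | FS _ => Node (flatten [seq hf_elems (fstar f (mol_comp h s)) | h : {perm I} <- enum H])
           end in
  hf_orbit G U.

Definition commutes_Aut (G : {set {perm I}}) : Prop :=
  forall pi, pi \in AutI col -> pi *: G = G :* pi.

End Molecules.

(* Main.v *)
Require Import Defs.
From mathcomp Require Import all_boot all_fingroup.
From Stdlib Require List.

Set Implicit Arguments. Unset Strict Implicit.
Local Open Scope group_scope.

Section Aux.

Lemma In_cat (T : Type) (x : T) (s1 s2 : seq T) :
  List.In x (s1 ++ s2) <-> List.In x s1 \/ List.In x s2.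
Proof. elim: s1 => [|a s IH] /=; first by tauto. rewrite IH; tauto. Qed.

Lemma In_mapP (T U : Type) (f : T -> U) (y : U) (s : seq T) :
  List.In y (map f s) <-> exists x, List.In x s /\ y = f x.
Proof.
elim: s => [|a s IH] /=; first by split=> // -[x []].
rewrite IH; split.
- case=> [<-|[x [H ->]]]; [by exists a; auto | by exists x; auto].
- case=> x [[<-|H] ->]; [by left | by right; exists x].
Qed.

Lemma In_flatten (T : Type) (x : T) (L : seq (seq T)) :
  List.In x (flatten L) <-> exists l, List.In l L /\ List.In x l.
Proof.
elim: L => [|a L IH] /=; first by split=> // -[l []].
rewrite In_cat IH; split.
- case=> [H|[l [H1 H2]]]; [by exists a; auto | by exists l; auto].
- case=> l [[<-|H1] H2]; [by left | by right; exists l].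
Qed.

Lemma In_mem (T : eqType) (x : T) (s : seq T) : List.In x s <-> x \in s.
Proof.
elim: s => [|a s IH] /=; first by rewrite in_nil.
rewrite in_cons IH; split; first by case=> [->|->]; rewrite ?eqxx ?orbT.
by case/orP=> [/eqP->|]; auto.
Qed.

Lemma allIn (T : Type) (p : pred T) (s : seq T) :
  all p s <-> forall x, List.In x s -> p x.
Proof.
elim: s => [|a s IH] //=; split.
- by case/andP=> Ha /IH Hs x [<-|]; auto.
- move=> H; rewrite H /=; [apply/IH => x Hx|]; auto.
Qed.

Lemma hasIn (T : Type) (p : pred T) (s : seq T) :
  has p s <-> exists x, List.In x s /\ p x.
Proof.
elim: s => [|a s IH] /=; first by split=> // -[x []].
split.
- case/orP=> [H|/IH[x [H1 H2]]]; [by exists a; auto | by exists x; auto].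
- case=> x [[<-|H1] H2]; first by rewrite H2.
  by apply/orP; right; apply/IH; exists x.
Qed.

Variable I : finType.

Fixpoint hf_rect' (P : hf I -> Prop) (HA : forall a, P (Atom a))
  (HN : forall l, (forall x, List.In x l -> P x) -> P (Node l)) (x : hf I) : P x :=
  match x with
  | Atom a => HA a
  | Node l => HN l ((fix F (l : seq (hf I)) : forall x, List.In x l -> P x :=
                     match l with
                     | [::] => fun x H => match H with end
                     | y :: l' => fun x H =>
                        match H with
                        | or_introl e => eq_ind y P (hf_rect' HA HN y) x e
                        | or_intror H' => F l' x H'
                        end
                     end) l)
  end.

Definition covers (l m : seq (hf I)) :=
  forall x : hf I, List.In x l -> exists y : hf I, List.In y m /\ hf_eq x y.

Lemma hf_eq_NodeE l m :
  hf_eq (Node l) (Node m) <->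
  covers l m /\ (forall y, List.In y m -> exists x, List.In x l /\ hf_eq x y).
Proof.
rewrite /= /covers; split.
- case/andP=> /allIn H1 /allIn H2; split.
  + by move=> x /H1 /hasIn.
  + by move=> y /H2 /hasIn.
- case=> H1 H2; apply/andP; split; apply/allIn.
  + by move=> x /H1 /hasIn.
  + by move=> y /H2 /hasIn.
Qed.

Lemma hf_eq_refl (x : hf I) : hf_eq x x.
Proof.
elim/hf_rect': x => [a|l IH] /=; first by rewrite eqxx.
apply/hf_eq_NodeE; split=> x Hx; exists x; auto.
Qed.

Lemma hf_eq_sym (x y : hf I) : hf_eq x y -> hf_eq y x.
Proof.
elim/hf_rect': x y => [a|l IH] [b|m] //=; first by rewrite eq_sym.
move/hf_eq_NodeE=> [H1 H2]; apply/hf_eq_NodeE; split.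
- move=> y /H2 [x [Hx Hxy]]; exists x; split=> //; exact: (IH _ Hx _ Hxy).
- move=> x Hx; have [y [Hy Hxy]] := H1 _ Hx; exists y; split=> //; exact: (IH _ Hx _ Hxy).
Qed.

Lemma hf_eq_trans (y x z : hf I) : hf_eq x y -> hf_eq y z -> hf_eq x z.
Proof.
elim/hf_rect': y x z => [b|m IH] [a|l] [c|n] //=; first by move=> /eqP-> /eqP->.
move/hf_eq_NodeE=> [H1 H2] /hf_eq_NodeE [H3 H4]; apply/hf_eq_NodeE; split.
- move=> x /H1 [y [Hy Hxy]]; have [z [Hz Hyz]] := H3 _ Hy.
  exists z; split=> //; exact: (IH _ Hy _ _ Hxy Hyz).
- move=> z /H4 [y [Hy Hyz]]; have [x [Hx Hxy]] := H2 _ Hy.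
  exists x; split=> //; exact: (IH _ Hy _ _ Hxy Hyz).
Qed.

Lemma hf_act_eq (t : {perm I}) (x y : hf I) : hf_eq x y -> hf_eq (hf_act t x) (hf_act t y).
Proof.
elim/hf_rect': x y => [a|l IH] [b|m] //=; first by move/eqP->.
move/hf_eq_NodeE=> [H1 H2]; apply/hf_eq_NodeE; split.
- move=> x' /In_mapP [x [Hx ->]]; have [y [Hy Hxy]] := H1 _ Hx.
  exists (hf_act t y); split; [apply/In_mapP; by exists y | exact: (IH _ Hx _ Hxy)].
- move=> y' /In_mapP [y [Hy ->]]; have [x [Hx Hxy]] := H2 _ Hy.
  exists (hf_act t x); split; [apply/In_mapP; by exists x | exact: (IH _ Hx _ Hxy)].
Qed.

Lemma hf_actM (p q : {perm I}) (x : hf I) : hf_act p (hf_act q x) = hf_act (q * p) x.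
Proof.
elim/hf_rect': x => [a|l IH] /=; first by rewrite permM.
congr Node; elim: l IH => [|a l IHl] IH //=.
by rewrite IH /= ?IHl //; auto => x Hx; apply: IH; right.
Qed.

Lemma hf_elems_act (t : {perm I}) (x : hf I) : hf_elems (hf_act t x) = map (hf_act t) (hf_elems x).
Proof. by case: x. Qed.

End Aux.

Section Forms.
Variables (I C : finType) (col : I -> C) (k : nat).
Variables (pi : {perm I}) (hpi : pi \in AutI col).

Fixpoint form_rect' (P : form C k -> Prop) (HC : forall p, P (FC C p))
  (HS : forall l, (forall f E, List.In (f, E) l -> P f) -> P (FS l)) (f : form C k) : P f :=
  match f with
  | FC p => HC p
  | FS l => HS l ((fix F (l : seq (form C k * config C k)) :
                     forall f E, List.In (f, E) l -> P f :=
                     match l with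
                     | [::] => fun f E H => match H with end
                     | y :: l' => fun f E H =>
                        match H with
                        | or_introl e => eq_ind y (fun z => P z.1) (form_rect' HC HS y.1) (f, E) e
                        | or_intror H' => F l' f E H'
                        end
                     end) l)
  end.

Lemma pick2_comp (p : {perm I}) (t s : {ffun 'I_k -> I}) i :
  pick2 (mol_comp p t) (mol_comp p s) i = mol_comp p (pick2 t s i).
Proof. by rewrite /pick2; case: ifP. Qed.

Lemma col_pi x : col (pi x) = col x.
Proof. by move: hpi; rewrite inE => /forallP /(_ x) /eqP. Qed.

Lemma conf_comp (t s : {ffun 'I_k -> I}) :
  conf (k:=k) col (mol_comp pi t) (mol_comp pi s) = conf col t s.
Proof.
rewrite /conf; congr pair; apply/ffunP => uv; rewrite !ffunE !pick2_comp !ffunE.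
  by rewrite (inj_eq perm_inj).
by rewrite col_pi.
Qed.

Lemma molecule_comp (p : {perm I}) (t : {ffun 'I_k -> I}) :
  molecule t -> molecule (mol_comp p t).
Proof.
move=> /injectiveP Ht; apply/injectiveP => i j; rewrite !ffunE => /perm_inj; exact: Ht.
Qed.

Lemma mol_compM (p q : {perm I}) (t : {ffun 'I_k -> I}) :
  mol_comp p (mol_comp q t) = mol_comp (q * p) t.
Proof. by apply/ffunP => i; rewrite !ffunE permM. Qed.

Lemma mol_comp1 (t : {ffun 'I_k -> I}) : mol_comp 1 t = t.
Proof. by apply/ffunP => i; rewrite !ffunE perm1. Qed.

Lemma mem_mols E s t : (t \in mols_with (k:=k) col E s) = molecule t && (conf col t s == E).
Proof. by rewrite mem_filter mem_enum andbT. Qed.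

Lemma fstar_act (f : form C k) (s : {ffun 'I_k -> I}) :
  hf_eq (hf_act pi (fstar col f s)) (fstar col f (mol_comp pi s)).
Proof.
elim/form_rect': f s => [p|l IH] s /=; first by rewrite ffunE eqxx.
apply/hf_eq_NodeE; split.
- move=> x' /In_mapP [x [/In_flatten [lst [/In_mapP [[f' E] [Hfe ->]] Hx]] ->]].
  move: Hx => /In_mapP [t [/In_mem Ht ->]].
  exists (fstar col f' (mol_comp pi t)); split; last exact: IH Hfe _.
  apply/In_flatten; exists (map (fun t => fstar col f' t) (mols_with col E (mol_comp pi s))).
  split; first by apply/In_mapP; exists (f', E).
  apply/In_mapP; exists (mol_comp pi t); split=> //; apply/In_mem.
  move: Ht; rewrite !mem_mols conf_comp => /andP [Hm ->]; rewrite molecule_comp //.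
- move=> y /In_flatten [lst [/In_mapP [[f' E] [Hfe ->]] Hy]].
  move: Hy => /In_mapP [t' [/In_mem Ht ->]].
  set t := mol_comp pi^-1 t'.
  have Htt : mol_comp pi t = t' by rewrite /t mol_compM mulVg mol_comp1.
  exists (hf_act pi (fstar col f' t)); split; last by rewrite -Htt; exact: IH Hfe _.
  apply/In_mapP; exists (fstar col f' t); split=> //.
  apply/In_flatten; exists (map (fun t => fstar col f' t) (mols_with col E s)).
  split; first by apply/In_mapP; exists (f', E).
  apply/In_mapP; exists t; split=> //; apply/In_mem.
  move: Ht; rewrite !mem_mols => /andP [Hm /eqP Hc].
  by rewrite molecule_comp //= -Hc -Htt conf_comp.
Qed.

End Forms.

Section Main.
Variables (I C : finType) (col : I -> C) (k : nat).
Variables (pi : {perm I}) (hpi : pi \in AutI col).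

Lemma elems_eq (a b : hf I) : hf_eq a b ->
  covers (hf_elems a) (hf_elems b) /\
  (forall y, List.In y (hf_elems b) -> exists x, List.In x (hf_elems a) /\ hf_eq x y).
Proof.
case: a => [x|l]; case: b => [y|m] //=; first by split=> ? [].
by move/hf_eq_NodeE.
Qed.

Lemma coset_l (G : {set {perm I}}) (hG : pi *: G = G :* pi) g :
  g \in G -> pi^-1 * (g * pi) \in G.
Proof.
move=> Hg; have : g * pi \in G :* pi by rewrite mem_rcoset mulgK.
by rewrite -hG mem_lcoset.
Qed.

Lemma coset_r (G : {set {perm I}}) (hG : pi *: G = G :* pi) g :
  g \in G -> (pi * g) * pi^-1 \in G.
Proof.
move=> Hg; have : pi * g \in pi *: G by rewrite mem_lcoset mulKg.
by rewrite hG mem_rcoset.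
Qed.

Lemma orbit_act (G : {set {perm I}}) (hG : pi *: G = G :* pi) (x y : hf I) :
  hf_eq (hf_act pi x) y -> hf_eq (hf_act pi (hf_orbit G x)) (hf_orbit G y).
Proof.
move=> Hxy; rewrite /hf_orbit /=; apply/hf_eq_NodeE; split.
- move=> x' /In_mapP [z [/In_mapP [g [/In_mem Hg ->]] ->]].
  exists (hf_act (pi^-1 * (g * pi)) y); split.
    apply/In_mapP; exists (pi^-1 * (g * pi)); split=> //.
    by apply/In_mem; rewrite mem_enum coset_l // -mem_enum.
  apply: (@hf_eq_trans _ (hf_act (pi^-1 * (g * pi)) (hf_act pi x))); last exact: hf_act_eq.
  by rewrite !hf_actM mulKVg hf_eq_refl.
- move=> y' /In_mapP [g [/In_mem Hg ->]].
  exists (hf_act pi (hf_act ((pi * g) * pi^-1) x)); split.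
    apply/In_mapP; exists (hf_act ((pi * g) * pi^-1) x); split=> //.
    apply/In_mapP; exists ((pi * g) * pi^-1); split=> //.
    by apply/In_mem; rewrite mem_enum coset_r // -mem_enum.
  apply: (hf_eq_trans _ (hf_act_eq g Hxy)).
  by rewrite !hf_actM mulgKV hf_eq_refl.
Qed.

Lemma U_FS (H : {set {perm I}}) (hH : pi *: H = H :* pi) (f : form C k) s :
  hf_eq (hf_act pi (Node (flatten [seq hf_elems (fstar col f (mol_comp h s)) | h : {perm I} <- enum H])))
        (Node (flatten [seq hf_elems (fstar col f (mol_comp h (mol_comp pi s))) | h : {perm I} <- enum H])).
Proof.
rewrite [hf_act _ (Node _)]/=; apply/hf_eq_NodeE; split.
- move=> x' /In_mapP [z [/In_flatten [lst [/In_mapP [h [/In_mem Hh ->]] Hz]] ->]].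
  have [C1 _] := elems_eq (fstar_act hpi f (mol_comp h s)).
  have [z' [Hz' Hzz']] : exists z', List.In z' (hf_elems (fstar col f (mol_comp pi (mol_comp h s))))
      /\ hf_eq (hf_act pi z) z'.
    apply: C1; rewrite hf_elems_act; apply/In_mapP; by exists z.
  exists z'; split=> //; apply/In_flatten.
  exists (hf_elems (fstar col f (mol_comp (pi^-1 * (h * pi)) (mol_comp pi s)))); split.
    apply/In_mapP; exists (pi^-1 * (h * pi)); split=> //.
    by apply/In_mem; rewrite mem_enum coset_l // -mem_enum.
  by rewrite mol_compM mulKVg -mol_compM.
- move=> y /In_flatten [lst [/In_mapP [h [/In_mem Hh ->]] Hy]].
  set h'' := (pi * h) * pi^-1.
  have E : mol_comp h (mol_comp pi s) = mol_comp pi (mol_comp h'' s).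
    by rewrite !mol_compM /h'' mulgKV.
  rewrite E in Hy.
  have [_ C2] := elems_eq (fstar_act hpi f (mol_comp h'' s)).
  have [w [Hw Hwy]] := C2 _ Hy.
  exists w; split=> //.
  move: Hw; rewrite hf_elems_act => /In_mapP [z [Hz ->]].
  apply/In_mapP; exists z; split=> //; apply/In_flatten.
  exists (hf_elems (fstar col f (mol_comp h'' s))); split=> //.
  apply/In_mapP; exists h''; split=> //.
  by apply/In_mem; rewrite mem_enum coset_r // -mem_enum.
Qed.

End Main.

Theorem lemma6 (I C : finType) (col : I -> C) (k : nat) (hk : 1 <= k)
  (phi : form C k) (G H : {group {perm I}})
  (hphi : wf_form phi) (hHG : H \subset G)
  (hG : commutes_Aut col G) (hH : commutes_Aut col H)
  (sigma : {ffun 'I_k -> I}) (hsigma : molecule sigma)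
  (pi : {perm I}) (hpi : pi \in AutI col) :
  hf_eq (hf_act pi (ostar col phi G H sigma))
        (ostar col phi G H (mol_comp pi sigma)).
Proof.
rewrite /ostar; apply: orbit_act; first exact: hG.
case: phi {hphi} => [p|l]; last exact: U_FS (hH _ hpi) _ _.
case: eqP => _ /=; first by rewrite ffunE eqxx.
have hH' := hH _ hpi.
apply/hf_eq_NodeE; split.
- move=> x' /In_mapP [z [/In_mapP [h [/In_mem Hh ->]] ->]].
  exists (Atom ((pi^-1 * (h * pi)) (mol_comp pi sigma p))); split; last first.
    by rewrite /= ffunE !permM permK.
  apply/In_mapP; exists (pi^-1 * (h * pi)); split=> //.
  by apply/In_mem; rewrite mem_enum coset_l // -mem_enum.
- move=> y /In_mapP [h [/In_mem Hh ->]].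
  exists (hf_act pi (Atom (((pi * h) * pi^-1) (sigma p)))); split.
    apply/In_mapP; exists (Atom (((pi * h) * pi^-1) (sigma p))); split=> //.
    apply/In_mapP; exists ((pi * h) * pi^-1); split=> //.
    by apply/In_mem; rewrite mem_enum coset_r // -mem_enum.
  by rewrite /= ffunE -permM mulgKV permM eqxx.
Qed.
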